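(* Let $\mathcal P$ be a projective plane of finite order $n$. Then $\mathcal P$ contains a Fano configuration (seven points and seven lines, each line containing exactly three of the points and each point on exactly three of the lines, i.e. a subplane of order $2$) if and only if $\mathcal P$ can be coordinatised (in the sense described in the context, with some labelling set $\mathcal R$ of cardinality $n$) in such a way that the resulting additive loop $(\mathcal R,\oplus)$ contains an involution, i.e. an element $t\neq 0$ with $t\oplus t=0$.
   Context: Coordinatisation of a projective plane $\mathcal P$ of order $n$: let $\mathcal R$ be a set of cardinality $n$ with two distinguished elements $0\neq 1$, and $\infty\notin\mathcal R$ a symbol. Choose a quadrangle $O,X,Y,I$ (four points, no three collinear). Label $O=(0,0)$, $X=(0)$, $Y=(\infty)$, $I=(1,1)$; set $[\infty]=\overline{XY}$, $[0]=\overline{OY}$, $[0,0]=\overline{OX}$. Set $(0,1)=\overline{XI}\cap[0]$, $(1,0)=\overline{YI}\cap[0,0]$, $J=(1)=\overline{(1,0)(0,1)}\cap[\infty]$. Label the remaining $n-2$ points of $[0]$ other than $O,Y,(0,1)$ as $(0,a)$, $a\in\mathcal R\setminus\{0,1\}$, arbitrarily. Then set $(a,0)=\overline{(0,a)J}\cap[0,0]$, $(a)=\overline{(0,a)(1,0)}\cap[\infty]$, $(a,b)=\overline{(a,0)Y}\cap\overline{(0,b)X}$, and label lines $[a]=\overline{(a,0)Y}$ and $[m,k]=\overline{(m)(0,k)}$. The planar ternary ring (PTR) is $T:\mathcal R^3\to\mathcal R$ with $T(m,x,y)=k$ iff $(x,y)\in[m,k]$. The additive loop is $x\oplus y=T(1,x,y)$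 (a loop on $\mathcal R$ with identity $0$) and the multiplicative loop is $x\odot y=T(x,y,0)$. *)

(* Defs.v *)
From mathcomp Require Import all_boot all_order.
Set Implicit Arguments. Unset Strict Implicit. Unset Printing Implicit Defensive.

Section Plane.
Variables (P : finType) (Lines : {set {set P}}).

Definition collinear3 (p q r : P) : bool :=
  [exists l in Lines, [&& p \in l, q \in l & r \in l]].

Definition quadrangle (O X Y U : P) : Prop :=
  [/\ uniq [:: O; X; Y; U],
      ~~ collinear3 O X Y, ~~ collinear3 O X U,
      ~~ collinear3 O Y U & ~~ collinear3 X Y U].

Definition proj_plane_of_order (n : nat) : Prop :=
  [/\ forall p q : P, p != q -> exists! l, l \in Lines /\ p \in l /\ q \in l,
      forall l m, l \in Lines -> m \in Lines -> l != m ->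
        exists! p : P, p \in l /\ p \in m,
      exists O X Y U, quadrangle O X Y U
    & forall l, l \in Lines -> #|l| = n.+1 ].

Definition has_fano_configuration : Prop :=
  exists (S : {set P}) (T : {set {set P}}),
    [/\ T \subset Lines, #|S| = 7, #|T| = 7,
        forall l, l \in T -> #|l :&: S| = 3
      & forall p, p \in S -> #|[set l in T | p \in l]| = 3].

(* the line through two points (meaningful for distinct points) *)
Definition join (p q : P) : {set P} :=
  odflt set0 [pick l in Lines | (p \in l) && (q \in l)].

(* the intersection point of two lines (meaningful for distinct lines);
   d is an irrelevant default value *)
Definition meet (d : P) (l m : {set P}) : P :=
  odflt d [pick p in l :&: m].

(* Coordinatisation w.r.t. quadrangle O, X, Y, U (U = the unit point I = (1,1))
   and labelling lab : R -> points of [0] other than Y, with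
   lab a = (0,a). *)
Section Coord.
Variables (R : finType) (zero one : R) (O X Y U : P) (lab : R -> P).

Definition line_inf := join X Y.
Definition line_0 := join O Y.
Definition line_00 := join O X.
Definition pt01 := meet O (join X U) line_0.
Definition pt10 := meet O (join Y U) line_00.
Definition ptJ := meet O (join pt10 pt01) line_inf.
Definition pt_a0 (a : R) := meet O (join (lab a) ptJ) line_00.
Definition pt_slope (a : R) := meet O (join (lab a) pt10) line_inf.
Definition pt_ab (a b : R) := meet O (join (pt_a0 a) Y) (join (lab b) X).
Definition line_mk (m k : R) := join (pt_slope m) (lab k).

Definition PTR (m x y : R) : R := odflt zero [pick k | pt_ab x y \in line_mk m k].

Definition loop_add (x y : R) : R := PTR one x y.

Definition is_coordinatisation (n : nat) : Prop :=
  [/\ zero != one, #|R| = n, quadrangle O X Y U,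
      lab zero = O & lab one = pt01] /\
  [/\ injective lab,
      forall r, lab r \in line_0 /\ lab r != Y
    & forall p, p \in line_0 -> p != Y -> exists r, lab r = p].

End Coord.
End Plane.

(* Main.v *)
Require Import Defs.
From mathcomp Require Import all_boot all_order.
Set Implicit Arguments. Unset Strict Implicit. Unset Printing Implicit Defensive.


Lemma card_count (T : finType) (s : seq T) (Q : pred T) :
  uniq s -> #|[set x in [set y in s] | Q x]| = count Q s.
Proof.
move=> us; rewrite -size_filter -(card_uniqP (filter_uniq Q us)).
by apply: eq_card => x; rewrite !inE mem_filter andbC.
Qed.

Lemma sepP (P : finType) (x y : P) (l : {set P}) : x \in l -> y \notin l -> x != y.
Proof. by move=> xl; apply: contra => /eqP <-. Qed.

Lemma sepL (P : finType) (x : P) (l m : {set P}) : x \in l -> x \notin m -> l != m.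
Proof. by move=> xl; apply: contra => /eqP <-. Qed.

Ltac neq_tac :=
  match goal with
  | |- is_true (?x != ?y) =>
    first
    [ assumption
    | rewrite eq_sym; assumption
    | match goal with H1 : is_true (x \in ?l), H2 : is_true (~~ (y \in ?l)) |- _ => exact (sepP H1 H2) end
    | match goal with H1 : is_true (y \in ?l), H2 : is_true (~~ (x \in ?l)) |- _ => rewrite eq_sym; exact (sepP H1 H2) end
    | match goal with H1 : is_true (?p \in ?X1), H2 : is_true (~~ (?p \in ?X2)) |- _ => exact (sepL H1 H2) end
    | match goal with H1 : is_true (?p \in ?X1), H2 : is_true (~~ (?p \in ?X2)) |- _ => rewrite eq_sym; exact (sepL H1 H2) end ]
  end.

Ltac rw_tac :=
  repeat match goal with
  | H : is_true (?x \in ?L) |- context[?x \in ?L] => rewrite H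
  | H : is_true (~~ (?x \in ?L)) |- context[?x \in ?L] => rewrite (negbTE H)
  end.

Lemma fano_table (P : finType) (Lines : {set {set P}}) (a b c d e f g : P)
  (L1 L2 L3 L4 L5 L6 L7 : {set P}) :
  L1 \in Lines -> L2 \in Lines -> L3 \in Lines -> L4 \in Lines ->
  L5 \in Lines -> L6 \in Lines -> L7 \in Lines ->
  a \in L1 -> b \in L1 -> e \in L1 ->
  c \in L2 -> d \in L2 -> e \in L2 ->
  a \in L3 -> c \in L3 -> f \in L3 ->
  b \in L4 -> d \in L4 -> f \in L4 ->
  a \in L5 -> d \in L5 -> g \in L5 ->
  b \in L6 -> c \in L6 -> g \in L6 ->
  e \in L7 -> f \in L7 -> g \in L7 ->
  c \notin L1 -> d \notin L1 -> f \notin L1 -> g \notin L1 ->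
  a \notin L2 -> b \notin L2 -> f \notin L2 -> g \notin L2 ->
  b \notin L3 -> d \notin L3 -> e \notin L3 -> g \notin L3 ->
  a \notin L4 -> c \notin L4 -> e \notin L4 -> g \notin L4 ->
  b \notin L5 -> c \notin L5 -> e \notin L5 -> f \notin L5 ->
  a \notin L6 -> d \notin L6 -> e \notin L6 -> f \notin L6 ->
  a \notin L7 -> b \notin L7 -> c \notin L7 -> d \notin L7 ->
  has_fano_configuration Lines.
Proof.
move=> *.
have uS : uniq [:: a; b; c; d; e; f; g].
  by rewrite /= !inE !negb_or /= !andbT; repeat (apply/andP; split); neq_tac.
have uT : uniq [:: L1; L2; L3; L4; L5; L6; L7].
  by rewrite /= !inE !negb_or /= !andbT; repeat (apply/andP; split); neq_tac.
exists [set x in [:: a; b; c; d; e; f; g]], [set x in [:: L1; L2; L3; L4; L5; L6; L7]].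
split.
- apply/subsetP => L; rewrite inE !in_cons in_nil orbF.
  by repeat (case/orP; [move/eqP->; assumption|]); move/eqP->.
- by rewrite cardsE (card_uniqP uS).
- by rewrite cardsE (card_uniqP uT).
- move=> L; rewrite inE => LT.
  have -> : L :&: [set x in [:: a; b; c; d; e; f; g]] = 
     [set x in [set y in [:: a; b; c; d; e; f; g]] | x \in L].
    by apply/setP => x; rewrite !inE andbC.
  rewrite card_count //.
  move: LT; rewrite !in_cons in_nil orbF.
  by repeat (case/orP; [move/eqP->; rewrite /=; rw_tac; reflexivity|]); move/eqP->; rewrite /=; rw_tac.
- move=> p; rewrite inE => pS.
  rewrite card_count //.
  move: pS; rewrite !in_cons in_nil orbF.
  by repeat (case/orP; [move/eqP->; rewrite /=; rw_tac; reflexivity|]); move/eqP->; rewrite /=; rw_tac.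
Qed.


Section Geo.
Variables (P : finType) (Lines : {set {set P}}) (n : nat).
Hypothesis pl : proj_plane_of_order Lines n.

Lemma line_uniq l m x y : l \in Lines -> m \in Lines -> x != y ->
  x \in l -> y \in l -> x \in m -> y \in m -> l = m.
Proof.
case: pl => H1 _ _ _ lL mL xy xl yl xm ym.
have [l0 [_ U]] := H1 _ _ xy.
by rewrite -(U l) ?(U m).
Qed.

Lemma pt_uniq l m x y : l \in Lines -> m \in Lines -> l != m ->
  x \in l -> x \in m -> y \in l -> y \in m -> x = y.
Proof.
move=> lL mL lm xl xm yl ym; apply/eqP; apply: contraNT lm => xy.
by apply/eqP; apply: (line_uniq lL mL xy).
Qed.

Lemma other_pt (p : P) : exists q, q != p.
Proof.
case: pl => _ _ [O [X [Y [U [uq _]]]]] _.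
move: uq; rewrite /= !inE !negb_or => /and4P [/and3P [OX _ _] _ _ _].
case: (eqVneq O p) => [<-|Op]; first by exists X; rewrite eq_sym.
by exists O.
Qed.

Lemma join_spec p q : [/\ join Lines p q \in Lines, p \in join Lines p q & q \in join Lines p q].
Proof.
have ex : exists l, [&& l \in Lines, p \in l & q \in l].
  case: (eqVneq p q) => [<-|pq].
    have [r rp] := other_pt p.
    case: pl => H1 _ _ _; have [l [[lL [rl pl']] _]] := H1 _ _ rp.
    by exists l; rewrite lL pl'.
  case: pl => H1 _ _ _; have [l [[lL [pl' ql]] _]] := H1 _ _ pq.
  by exists l; rewrite lL pl' ql.
rewrite /join; case: pickP => [l /and3P [-> -> ->] //|H].
by case: ex => l; rewrite H.
Qed.

Lemma joinL p q : join Lines p q \in Lines. Proof. by case: (join_spec p q). Qed.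
Lemma join1 p q : p \in join Lines p q. Proof. by case: (join_spec p q). Qed.
Lemma join2 p q : q \in join Lines p q. Proof. by case: (join_spec p q). Qed.

Lemma join_eq l p q : l \in Lines -> p != q -> p \in l -> q \in l -> join Lines p q = l.
Proof. by move=> lL pq pl' ql; apply: (line_uniq (joinL p q) lL pq) => //; rewrite ?join1 ?join2. Qed.

Lemma joinC p q : join Lines p q = join Lines q p.
Proof.
case: (eqVneq p q) => [->//|pq].
by apply: join_eq => //; rewrite ?joinL ?join1 ?join2.
Qed.

Lemma meet_spec d l m : l \in Lines -> m \in Lines -> l != m ->
  meet d l m \in l /\ meet d l m \in m.
Proof.
case: pl => _ H2 _ _ lL mL lm.
have [p [[pl' pm] _]] := H2 _ _ lL mL lm.
rewrite /meet; case: pickP => [x|H]; first by rewrite inE => /andP.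
by move: (H p); rewrite inE pl' pm.
Qed.

Lemma meet_eq d l m p : l \in Lines -> m \in Lines -> l != m ->
  p \in l -> p \in m -> meet d l m = p.
Proof.
move=> lL mL lm pl' pm; have [h1 h2] := meet_spec d lL mL lm.
exact: (pt_uniq lL mL lm).
Qed.

Lemma col_intro l p q r : l \in Lines -> p \in l -> q \in l -> r \in l -> collinear3 Lines p q r.
Proof. by move=> lL pl' ql rl; apply/existsP; exists l; rewrite lL pl' ql rl. Qed.

Lemma colE3 l p q r : ~~ collinear3 Lines p q r -> l \in Lines -> p \in l -> q \in l -> r \notin l.
Proof. by move=> nc lL pl' ql; apply: contra nc => rl; apply: (col_intro lL). Qed.
Lemma colE2 l p q r : ~~ collinear3 Lines p q r -> l \in Lines -> p \in l -> r \in l -> q \notin l.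
Proof. by move=> nc lL pl' rl; apply: contra nc => ql; apply: (col_intro lL). Qed.
Lemma colE1 l p q r : ~~ collinear3 Lines p q r -> l \in Lines -> q \in l -> r \in l -> p \notin l.
Proof. by move=> nc lL ql rl; apply: contra nc => pl'; apply: (col_intro lL). Qed.

Lemma excl l m x y z : l \in Lines -> m \in Lines -> x != y -> x \in l -> y \in l ->
  x \in m -> z \in m -> z \notin l -> y \notin m.
Proof.
move=> lL mL xy xl yl xm zm; apply: contra => ym.
by rewrite (line_uniq lL mL xy xl yl xm ym).
Qed.

End Geo.


Ltac excl_tac pl :=
  match goal with |- is_true (~~ (?y \in ?m)) =>
  match goal with
  | Hyl : is_true (y \in ?l), Hzm : is_true (?z \in m), Hzl : is_true (~~ (?z \in ?l)),
    Hxl : is_true (?x \in ?l), Hxm : is_true (?x \in m) |- _ =>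
     refine (excl pl _ _ _ Hxl Hyl Hxm Hzm Hzl); [assumption|assumption|neq_tac]
  end end.

Section Geo2.
Variables (P : finType) (Lines : {set {set P}}) (n : nat).
Hypothesis pl : proj_plane_of_order Lines n.

Lemma fano_of_quad a b c d e f g h : quadrangle Lines a b c d ->
  h \in Lines -> e \in h -> f \in h -> g \in h ->
  e \in join Lines a b -> e \in join Lines c d ->
  f \in join Lines a c -> f \in join Lines b d ->
  g \in join Lines a d -> g \in join Lines b c -> has_fano_configuration Lines.
Proof.
case=> _ nabc nabd nacd nbcd hL eh fh gh.
have Lab := joinL pl a b; have aab := join1 pl a b; have bab := join2 pl a b.
have Lcd := joinL pl c d; have ccd := join1 pl c d; have dcd := join2 pl c d.
have Lac := joinL pl a c; have aac := join1 pl a c; have cac := join2 pl a c.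
have Lbd := joinL pl b d; have bbd := join1 pl b d; have dbd := join2 pl b d.
have Lad := joinL pl a d; have aad := join1 pl a d; have dad := join2 pl a d.
have Lbc := joinL pl b c; have bbc := join1 pl b c; have cbc := join2 pl b c.
move: Lab aab bab Lcd ccd dcd Lac aac cac Lbd bbd dbd Lad aad dad Lbc bbc cbc.
set ab := join Lines a b; set cd := join Lines c d; set ac := join Lines a c.
set bd := join Lines b d; set ad := join Lines a d; set bc := join Lines b c.
move=> Lab aab bab Lcd ccd dcd Lac aac cac Lbd bbd dbd Lad aad dad Lbc bbc cbc eab ecd fac fbd gad gbc.
have n1 : c \notin ab by apply: (colE3 nabc).
have n2 : b \notin ac by apply: (colE2 nabc).
have n3 : a \notin bc by apply: (colE1 nabc).
have n4 : d \notin ab by apply: (colE3 nabd).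
have n5 : b \notin ad by apply: (colE2 nabd).
have n6 : a \notin bd by apply: (colE1 nabd).
have n7 : d \notin ac by apply: (colE3 nacd).
have n8 : c \notin ad by apply: (colE2 nacd).
have n9 : a \notin cd by apply: (colE1 nacd).
have n10 : d \notin bc by apply: (colE3 nbcd).
have n11 : c \notin bd by apply: (colE2 nbcd).
have n12 : b \notin cd by apply: (colE1 nbcd).
have m1 : e \notin ac by excl_tac pl.
have m2 : e \notin ad by excl_tac pl.
have m3 : e \notin bc by excl_tac pl.
have m4 : e \notin bd by excl_tac pl.
have m5 : f \notin ab by excl_tac pl.
have m6 : f \notin ad by excl_tac pl.
have m7 : f \notin bc by excl_tac pl.
have m8 : f \notin cd by excl_tac pl.
have m9 : g \notin ab by excl_tac pl.
have m10 : g \notin ac by excl_tac pl.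
have m11 : g \notin bd by excl_tac pl.
have m12 : g \notin cd by excl_tac pl.
have k1 : a \notin h by excl_tac pl.
have k2 : b \notin h by excl_tac pl.
have k3 : c \notin h by excl_tac pl.
have k4 : d \notin h by excl_tac pl.
by apply: (@fano_table P Lines a b c d e f g ab cd ac bd ad bc h).
Qed.

End Geo2.


Section Geo3.
Variables (P : finType) (Lines : {set {set P}}) (n : nat).
Hypothesis pl : proj_plane_of_order Lines n.

Lemma ncol p q r : p != q -> r \notin join Lines p q -> ~~ collinear3 Lines p q r.
Proof.
move=> pq rn; apply/existsP => [[l /and4P [lL pl' ql rl]]].
by move: rn; rewrite (join_eq pl lL pq pl' ql) rl.
Qed.

Lemma backward (R : finType) (zero one : R) (O X Y U : P) (lab : R -> P) (t : R) :
  is_coordinatisation Lines zero one O X Y U lab n -> t != zero ->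
  loop_add Lines zero one O X Y U lab t t = zero -> has_fano_configuration Lines.
Proof.
case=> [[z1 cR qd lab0 lab1] [labi labin labsu]] tz.
have [uq nOXY nOXU nOYU nXYU] := qd.
move: uq; rewrite /= !inE !negb_or => /and4P [/and3P [OX OY OU] /andP [XY XU] YU _].
rewrite /loop_add /PTR /line_mk /pt_slope /pt_ab /pt_a0 lab1.
move: labin labsu; rewrite /line_0 => labin labsu.
have BO : lab t != O by rewrite -lab0 (inj_eq labi).
have := labin t; move: (lab t) BO => B BO [Bl0 BY].
rewrite /pt01 /line_0 /pt10 /line_00 /line_inf /ptJ.
have Ll0 := joinL pl O Y; have Ol0 := join1 pl O Y; have Yl0 := join2 pl O Y.
have Ll00 := joinL pl O X; have Ol00 := join1 pl O X; have Xl00 := join2 pl O X.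
have Llinf := joinL pl X Y; have Xlinf := join1 pl X Y; have Ylinf := join2 pl X Y.
have LXU := joinL pl X U; have XXU := join1 pl X U; have UXU := join2 pl X U.
have LYU := joinL pl Y U; have YYU := join1 pl Y U; have UYU := join2 pl Y U.
move: Ll0 Ol0 Yl0 Ll00 Ol00 Xl00 Llinf Xlinf Ylinf LXU XXU UXU LYU YYU UYU labin labsu Bl0.
set l0 := join Lines O Y; set l00 := join Lines O X; set linf := join Lines X Y.
set xu := join Lines X U; set yu := join Lines Y U.
move=> Ll0 Ol0 Yl0 Ll00 Ol00 Xl00 Llinf Xlinf Ylinf LXU XXU UXU LYU YYU UYU labin labsu Bl0.
have nX0 : X \notin l0 by apply: (colE2 nOXY).
have nY00 : Y \notin l00 by apply: (colE3 nOXY).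
have nOXU' : O \notin xu by apply: (colE1 nOXU).
have nYXU : Y \notin xu by apply: (colE2 nXYU).
have nOYU' : O \notin yu by apply: (colE1 nOYU).
have nXYU' : X \notin yu by apply: (colE1 nXYU).
have nOlinf : O \notin linf by apply: (colE1 nOXY).
have [p01xu p01l0] := meet_spec pl O LXU Ll0 (sepL XXU nX0).
have [p10yu p10l00] := meet_spec pl O LYU Ll00 (sepL YYU nY00).
move: p01xu p01l0 p10yu p10l00.
set p01 := meet O xu l0; set p10 := meet O yu l00 => p01xu p01l0 p10yu p10l00.
have l0l00 : l0 != l00 by apply: sepL Yl0 nY00.
have l0linf : l0 != linf by apply: sepL Ol0 nOlinf.
have l00linf : l00 != linf by apply: sepL Ol00 nOlinf.
have p01O : p01 != O by neq_tac.
have p01Y : p01 != Y by neq_tac.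
have p10O : p10 != O by neq_tac.
have p10X : p10 != X by neq_tac.
have np01l00 : p01 \notin l00.
  by apply: contra p01O => h; apply/eqP; apply: (pt_uniq pl Ll0 Ll00).
have np10l0 : p10 \notin l0.
  by apply: contra p10O => h; apply/eqP; apply: (pt_uniq pl Ll0 Ll00).
have np01linf : p01 \notin linf.
  by apply: contra p01Y => h; apply/eqP; apply: (pt_uniq pl Ll0 Llinf).
have np10linf : p10 \notin linf.
  by apply: contra p10X => h; apply/eqP; apply: (pt_uniq pl Ll00 Llinf).
have p10p01 : p10 != p01 by neq_tac.
rewrite (joinC pl p01 p10).
have LM := joinL pl p10 p01; have p10M := join1 pl p10 p01; have p01M := join2 pl p10 p01.
move: LM p10M p01M; set M := join Lines p10 p01 => LM p10M p01M.
have [JM Jlinf] := meet_spec pl O LM Llinf (sepL p10M np10linf).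
move: JM Jlinf; set J := meet O M linf => JM Jlinf.
have nXM : X \notin M by excl_tac pl.
have nYM : Y \notin M by excl_tac pl.
have nJl0 : J \notin l0 by excl_tac pl.
have nJl00 : J \notin l00 by excl_tac pl.
have nBlinf : B \notin linf.
  by apply: contra BY => h; apply/eqP; apply: (pt_uniq pl Ll0 Llinf).
have nBl00 : B \notin l00.
  by apply: contra BO => h; apply/eqP; apply: (pt_uniq pl Ll0 Ll00).
have LBJ := joinL pl B J; have BBJ := join1 pl B J; have JBJ := join2 pl B J.
move: LBJ BBJ JBJ; set BJ := join Lines B J => LBJ BBJ JBJ.
have [ABJ Al00] := meet_spec pl O LBJ Ll00 (sepL BBJ nBl00).
move: ABJ Al00; set A := meet O BJ l00 => ABJ Al00.
have nXBJ : X \notin BJ by excl_tac pl.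
have nOBJ : O \notin BJ by excl_tac pl.
have nAl0 : A \notin l0 by excl_tac pl.
have nAlinf : A \notin linf by excl_tac pl.
have LAY := joinL pl A Y; have AAY := join1 pl A Y; have YAY := join2 pl A Y.
have LBX := joinL pl B X; have BBX := join1 pl B X; have XBX := join2 pl B X.
move: LAY AAY YAY LBX BBX XBX.
set AY := join Lines A Y; set BX := join Lines B X => LAY AAY YAY LBX BBX XBX.
have nYBX : Y \notin BX by excl_tac pl.
have [PAY PBX] := meet_spec pl O LAY LBX (sepL YAY nYBX).
move: PAY PBX; set P' := meet O AY BX => PAY PBX.
have nXAY : X \notin AY by excl_tac pl.
have nOAY : O \notin AY by excl_tac pl.
have nPlinf : P' \notin linf by excl_tac pl.
have nPl0 : P' \notin l0 by excl_tac pl.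
have nOBX : O \notin BX by excl_tac pl.
have nPl00 : P' \notin l00 by excl_tac pl.
have LJO := joinL pl J O; have JJO := join1 pl J O; have OJO := join2 pl J O.
move: LJO JJO OJO; set JO := join Lines J O => LJO JJO OJO.
move=> Hadd.
have PJO : P' \in JO.
  move: Hadd; case: pickP => [k Hk|Hn] /=.
    by move=> kz; move: Hk; rewrite kz lab0.
  move=> _; exfalso.
  have LJP := joinL pl J P'; have JJP := join1 pl J P'; have PJP := join2 pl J P'.
  move: LJP JJP PJP; set JP := join Lines J P' => LJP JJP PJP.
  have [qJP ql0] := meet_spec pl O LJP Ll0 (sepL JJP nJl0).
  move: qJP ql0; set q := meet O JP l0 => qJP ql0.
  have nYJP : Y \notin JP by excl_tac pl.
  have qY : q != Y by neq_tac.
  have [r rq] := labsu q ql0 qY.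
  move: (Hn r); rewrite rq.
  have Jq : J != q by neq_tac.
  by rewrite (join_eq pl LJP Jq JJP qJP) PJP.
have qd' : quadrangle Lines O X Y P'.
  split => //.
  - rewrite /= !inE !negb_or OX OY XY /=.
    by repeat (apply/andP; split); try neq_tac.
  - by apply: ncol.
  - by apply: ncol.
  - by apply: ncol.
apply: (fano_of_quad pl qd' LBJ ABJ BBJ JBJ) => //.
- by rewrite (join_eq pl LAY (_ : Y != P') YAY PAY) //; neq_tac.
- by rewrite (join_eq pl LBX (_ : X != P') XBX PBX) //; neq_tac.
- by rewrite (join_eq pl LJO (_ : O != P') OJO PJO) //; neq_tac.
Qed.

End Geo3.


Section Geo4.
Variables (P : finType) (Lines : {set {set P}}) (n : nat).
Hypothesis pl : proj_plane_of_order Lines n.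

Lemma forward_coord a b c d e f g h : quadrangle Lines a b c d ->
  h \in Lines -> e \in h -> f \in h -> g \in h ->
  e \in join Lines a b -> e \in join Lines c d ->
  f \in join Lines a c -> f \in join Lines b d ->
  g \in join Lines a d -> g \in join Lines b c ->
   exists (R : finType) (zero one : R) (O X Y U : P) (lab : R -> P),
     is_coordinatisation Lines zero one O X Y U lab n /\
     exists t : R, t != zero /\ loop_add Lines zero one O X Y U lab t t = zero.
Proof.
move=> qd; have [uq nabc nabd nacd nbcd] := qd.
move: uq; rewrite /= !inE !negb_or => /and4P [/and3P [ab' ac' ad'] /andP [bc' bd'] cd' _].
move=> hL eh fh gh.
have Lab := joinL pl a b; have aab := join1 pl a b; have bab := join2 pl a b.
have Lcd := joinL pl c d; have ccd := join1 pl c d; have dcd := join2 pl c d.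
have Lac := joinL pl a c; have aac := join1 pl a c; have cac := join2 pl a c.
have Lbd := joinL pl b d; have bbd := join1 pl b d; have dbd := join2 pl b d.
have Lad := joinL pl a d; have aad := join1 pl a d; have dad := join2 pl a d.
have Lbc := joinL pl b c; have bbc := join1 pl b c; have cbc := join2 pl b c.
move: Lab aab bab Lcd ccd dcd Lac aac cac Lbd bbd dbd Lad aad dad Lbc bbc cbc.
set ab := join Lines a b; set cd := join Lines c d; set ac := join Lines a c.
set bd := join Lines b d; set ad := join Lines a d; set bc := join Lines b c.
move=> Lab aab bab Lcd ccd dcd Lac aac cac Lbd bbd dbd Lad aad dad Lbc bbc cbc eab ecd fac fbd gad gbc.
have n1 : c \notin ab by apply: (colE3 nabc).
have n2 : b \notin ac by apply: (colE2 nabc).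
have n3 : a \notin bc by apply: (colE1 nabc).
have n4 : d \notin ab by apply: (colE3 nabd).
have n5 : b \notin ad by apply: (colE2 nabd).
have n6 : a \notin bd by apply: (colE1 nabd).
have n7 : d \notin ac by apply: (colE3 nacd).
have n8 : c \notin ad by apply: (colE2 nacd).
have n9 : a \notin cd by apply: (colE1 nacd).
have n10 : d \notin bc by apply: (colE3 nbcd).
have n11 : c \notin bd by apply: (colE2 nbcd).
have n12 : b \notin cd by apply: (colE1 nbcd).
have m1 : e \notin ac by excl_tac pl.
have m2 : e \notin ad by excl_tac pl.
have m3 : e \notin bc by excl_tac pl.
have m4 : e \notin bd by excl_tac pl.
have m5 : f \notin ab by excl_tac pl.
have m6 : f \notin ad by excl_tac pl.
have m7 : f \notin bc by excl_tac pl.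
have m8 : f \notin cd by excl_tac pl.
have m9 : g \notin ab by excl_tac pl.
have m10 : g \notin ac by excl_tac pl.
have m11 : g \notin bd by excl_tac pl.
have m12 : g \notin cd by excl_tac pl.
have k1 : a \notin h by excl_tac pl.
have k2 : b \notin h by excl_tac pl.
have k3 : c \notin h by excl_tac pl.
have k4 : d \notin h by excl_tac pl.
pose pr := fun p : P => (p \in ac) && (p != c).
have pra : pr a by rewrite /pr aac /=; neq_tac.
have prf : pr f by rewrite /pr fac /=; neq_tac.
exists {p : P | pr p}, (exist _ a pra), (exist _ f prf), a, b, c, d, val.
have p01 : pt01 Lines a b c d = f.
  by apply: (meet_eq pl) => //; neq_tac.
have p10 : pt10 Lines a b c d = e.
  by apply: (meet_eq pl) => //; neq_tac.
have hef : join Lines e f = h by apply: (join_eq pl) => //; neq_tac.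
have hfe : join Lines f e = h by apply: (join_eq pl) => //; neq_tac.
have hfg : join Lines f g = h by apply: (join_eq pl) => //; neq_tac.
have pJ : ptJ Lines a b c d = g.
  by rewrite /ptJ p10 p01 hef; apply: (meet_eq pl) => //; neq_tac.
split.
  split; first split => //.
  - by apply/eqP => /(congr1 val) /= /eqP; apply/negP; neq_tac.
  - rewrite card_sig; case: pl => _ _ _ /(_ ac Lac) Hc.
    have := cardsD1 c ac; rewrite cac Hc add1n => -[->].
    by apply: eq_card => x; rewrite !inE /pr andbC.
  split.
  - exact: val_inj.
  - by move=> [r Hr] /=; move/andP: Hr => [H1 H2].
  - by move=> p H1 H2; exists (exist _ p (introT andP (conj H1 H2))).
exists (exist _ f prf); split.
  by apply/eqP => /(congr1 val) /= /eqP; apply/negP; neq_tac.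
rewrite /loop_add /PTR /line_mk /pt_slope /pt_ab /pt_a0 /=.
rewrite pJ hfg p10 hfe.
have -> : meet a h (line_00 Lines a b) = e by apply: (meet_eq pl) => //; neq_tac.
have -> : meet a h (line_inf Lines b c) = g by apply: (meet_eq pl) => //; neq_tac.
have -> : join Lines e c = cd by apply: (join_eq pl) => //; neq_tac.
have -> : join Lines f b = bd by apply: (join_eq pl) => //; neq_tac.
have -> : meet a cd bd = d by apply: (meet_eq pl) => //; neq_tac.
have nal : a \notin bc by [].
have ngac : g \notin ac by [].
case: pickP => [k Hk|Hn] /=.
  apply: val_inj => /=.
  case: k Hk => k /= /andP [kac kc] Hk.
  have gk : g != k by neq_tac.
  have E : join Lines g k = ad.
    apply: (line_uniq pl (joinL pl g k) Lad (_ : g != d)); rewrite ?(join1 pl) //; try neq_tac.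
  have kad : k \in ad by rewrite -E (join2 pl).
  apply/eqP; apply: contraT => ka.
  have E2 : ad = ac by apply: (line_uniq pl Lad Lac ka).
  by move: n8; rewrite E2 cac.
exfalso; move: (Hn (exist _ a pra)) => /=.
by rewrite (join_eq pl Lad (_ : g != a) gad aad) ?dad //; neq_tac.
Qed.

End Geo4.


Lemma card3P (T : finType) (A : {set T}) x : #|A| = 3 -> x \in A ->
  exists y z, [/\ y \in A, z \in A, y != x, z != x & y != z] /\
     forall w, w \in A -> [|| w == x, w == y | w == z].
Proof.
move=> cA xA.
have c2 : #|A :\ x| = 2 by move: (cardsD1 x A); rewrite xA cA add1n => -[].
have : 0 < #|A :\ x| by rewrite c2.
case/card_gt0P => y; rewrite !inE => /andP [yx yA].
have c1 : #|A :\ x :\ y| == 1.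
  by move: (cardsD1 y (A :\ x)); rewrite !inE yx yA c2 add1n => -[<-].
case/cards1P: c1 => z Ez.
have : z \in A :\ x :\ y by rewrite Ez set11.
rewrite !inE => /and3P [zy zx zA].
exists y, z; split; first by split => //; rewrite eq_sym.
move=> w wA; case: (eqVneq w x) => //= wx; case: (eqVneq w y) => //= wy.
have : w \in A :\ x :\ y by rewrite !inE wx wy wA.
by rewrite Ez inE.
Qed.

Lemma card3P2 (T : finType) (A : {set T}) x y : #|A| = 3 -> x \in A -> y \in A -> x != y ->
  exists z, [/\ z \in A, z != x, z != y &
     forall w, w \in A -> [|| w == x, w == y | w == z]].
Proof.
move=> cA xA yA xy.
have [y' [z [[y'A zA y'x zx y'z] H]]] := card3P cA xA.
case/or3P: (H y yA) => [/eqP yx|/eqP yy|/eqP yz].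
- by rewrite yx eqxx in xy.
- exists z; split => //; first by rewrite yy eq_sym.
  by move=> w /H; rewrite yy.
- exists y'; split => //; first by rewrite yz.
  by move=> w /H /or3P [->|/eqP ->|/eqP ->]; rewrite ?eqxx ?orbT // -yz eqxx orbT.
Qed.

Section Geo5.
Variables (P : finType) (Lines : {set {set P}}) (n : nat).
Hypothesis pl : proj_plane_of_order Lines n.

Lemma out_line l m x p : l \in Lines -> m \in Lines -> l != m -> p \in l -> p \in m ->
  x \in l -> x != p -> x \notin m.
Proof.
move=> lL mL lm pl' pm xl; apply: contra => xm; apply/eqP.
exact: (pt_uniq pl lL mL lm).
Qed.

Lemma cover_lem (S : {set P}) (T : {set {set P}}) p q :
  T \subset Lines -> #|S| = 7 -> (forall l, l \in T -> #|l :&: S| = 3) ->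
  (forall p, p \in S -> #|[set l in T | p \in l]| = 3) ->
  p \in S -> q \in S -> p != q -> exists2 l, l \in T & (p \in l) && (q \in l).
Proof.
move=> /subsetP TL cS HT HS pS qS pq.
case: (boolP [exists l in T, (p \in l) && (q \in l)]).
  by case/existsP => l /andP [lT H]; exists l.
rewrite negb_exists => /forallP Hn.
have : 0 < #|[set l in T | p \in l]| by rewrite HS.
case/card_gt0P => l1 l1T.
have [l2 [l3 [[l2T l3T l21 l31 l23] _]]] := card3P (HS p pS) l1T.
move: l1T l2T l3T; rewrite !inE => /andP [l1T pl1] /andP [l2T pl2] /andP [l3T pl3].
have L1 := TL _ l1T; have L2 := TL _ l2T; have L3 := TL _ l3T.
have ql1 : q \notin l1 by move: (Hn l1); rewrite l1T pl1.
have ql2 : q \notin l2 by move: (Hn l2); rewrite l2T pl2.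
have ql3 : q \notin l3 by move: (Hn l3); rewrite l3T pl3.
have pS1 : p \in l1 :&: S by rewrite inE pl1.
have pS2 : p \in l2 :&: S by rewrite inE pl2.
have pS3 : p \in l3 :&: S by rewrite inE pl3.
have [x1 [y1 [[x1S y1S x1p y1p x1y1] _]]] := card3P (HT _ l1T) pS1.
have [x2 [y2 [[x2S y2S x2p y2p x2y2] _]]] := card3P (HT _ l2T) pS2.
have [x3 [y3 [[x3S y3S x3p y3p x3y3] _]]] := card3P (HT _ l3T) pS3.
move: x1S y1S x2S y2S x3S y3S; rewrite !inE.
move=> /andP [x1l x1S] /andP [y1l y1S] /andP [x2l x2S] /andP [y2l y2S] /andP [x3l x3S] /andP [y3l y3S].
have l12 : l1 != l2 by rewrite eq_sym.
have l13 : l1 != l3 by rewrite eq_sym.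
have l32 : l3 != l2 by rewrite eq_sym.
have o1 : x1 \notin l2 by apply: (out_line L1 L2 l12 pl1 pl2).
have o2 : y1 \notin l2 by apply: (out_line L1 L2 l12 pl1 pl2).
have o3 : x1 \notin l3 by apply: (out_line L1 L3 l13 pl1 pl3).
have o4 : y1 \notin l3 by apply: (out_line L1 L3 l13 pl1 pl3).
have o5 : x2 \notin l1 by apply: (out_line L2 L1 l21 pl2 pl1).
have o6 : y2 \notin l1 by apply: (out_line L2 L1 l21 pl2 pl1).
have o7 : x2 \notin l3 by apply: (out_line L2 L3 l23 pl2 pl3).
have o8 : y2 \notin l3 by apply: (out_line L2 L3 l23 pl2 pl3).
have o9 : x3 \notin l1 by apply: (out_line L3 L1 l31 pl3 pl1).
have o10 : y3 \notin l1 by apply: (out_line L3 L1 l31 pl3 pl1).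
have o11 : x3 \notin l2 by apply: (out_line L3 L2 l32 pl3 pl2).
have o12 : y3 \notin l2 by apply: (out_line L3 L2 l32 pl3 pl2).
have u : uniq [:: p; q; x1; y1; x2; y2; x3; y3].
  by rewrite /= !inE !negb_or /= !andbT; repeat (apply/andP; split); try neq_tac.
have sub : [set x in [:: p; q; x1; y1; x2; y2; x3; y3]] \subset S.
  apply/subsetP => x; rewrite !inE.
  by repeat (case/orP; [move/eqP->; assumption|]); move/eqP->.
by move: (subset_leq_card sub); rewrite cardsE (card_uniqP u) cS.
Qed.

End Geo5.


Ltac contra_tac :=
  match goal with
  | H : is_true (?x \in ?L), H' : is_true (~~ (?x \in ?L)) |- _ => by rewrite H in H'
  | H : is_true (?x != ?x) |- _ => by rewrite eqxx in H
  end.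

Section Geo6.
Variables (P : finType) (Lines : {set {set P}}) (n : nat).
Hypothesis pl : proj_plane_of_order Lines n.

Lemma forward_fano : has_fano_configuration Lines ->
   exists (R : finType) (zero one : R) (O X Y U : P) (lab : R -> P),
     is_coordinatisation Lines zero one O X Y U lab n /\
     exists t : R, t != zero /\ loop_add Lines zero one O X Y U lab t t = zero.
Proof.
case=> S [T [TLs cS cT HT HS]].
have TL := subsetP TLs.
have : 0 < #|T| by rewrite cT.
case/card_gt0P => h hT; have hL := TL _ hT.
have : 0 < #|h :&: S| by rewrite HT.
case/card_gt0P => e eS'.
have [f [g [[fS' gS' fe ge fg] _]]] := card3P (HT _ hT) eS'.
move: eS' fS' gS'; rewrite !inE => /andP [eh eS] /andP [fh fS] /andP [gh gS].
have : ~~ (S \subset h).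
  apply/negP => sub; have : S \subset h :&: S by rewrite subsetI sub subxx.
  by move/subset_leq_card; rewrite (HT _ hT) cS.
case/subsetPn => a aS ah.
have ae : a != e by neq_tac.
have af : a != f by neq_tac.
have ag : a != g by neq_tac.
have [Lae LaeT /andP [aLae eLae]] := cover_lem pl TLs cS HT HS aS eS ae.
have [Laf LafT /andP [aLaf fLaf]] := cover_lem pl TLs cS HT HS aS fS af.
have [Lag LagT /andP [aLag gLag]] := cover_lem pl TLs cS HT HS aS gS ag.
have LLae := TL _ LaeT; have LLaf := TL _ LafT; have LLag := TL _ LagT.
have i1 : a \in Lae :&: S by rewrite inE aLae.
have i2 : e \in Lae :&: S by rewrite inE eLae.
have i3 : a \in Laf :&: S by rewrite inE aLaf.
have i4 : f \in Laf :&: S by rewrite inE fLaf.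
have i5 : a \in Lag :&: S by rewrite inE aLag.
have i6 : g \in Lag :&: S by rewrite inE gLag.
have [b [bS' ba be _]] := card3P2 (HT _ LaeT) i1 i2 ae.
have [c [cS' ca cf _]] := card3P2 (HT _ LafT) i3 i4 af.
have [d [dS' da dg _]] := card3P2 (HT _ LagT) i5 i6 ag.
clear i1 i2 i3 i4 i5 i6.
move: bS' cS' dS'; rewrite !inE => /andP [bLae bS] /andP [cLaf cS'] /andP [dLag dS].
have n1 : e \notin Laf by excl_tac pl.
have n2 : e \notin Lag by excl_tac pl.
have n3 : f \notin Lae by excl_tac pl.
have n4 : f \notin Lag by excl_tac pl.
have n5 : g \notin Lae by excl_tac pl.
have n6 : g \notin Laf by excl_tac pl.
have n7 : b \notin Laf by excl_tac pl.
have n8 : b \notin Lag by excl_tac pl.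
have n9 : c \notin Lae by excl_tac pl.
have n10 : c \notin Lag by excl_tac pl.
have n11 : d \notin Lae by excl_tac pl.
have n12 : d \notin Laf by excl_tac pl.
have n13 : b \notin h by excl_tac pl.
have n14 : c \notin h by excl_tac pl.
have n15 : d \notin h by excl_tac pl.
have u7 : uniq [:: a; b; c; d; e; f; g].
  by rewrite /= !inE !negb_or /= !andbT; repeat (apply/andP; split); try neq_tac.
have sub7 : [set x in [:: a; b; c; d; e; f; g]] \subset S.
  apply/subsetP => x; rewrite !inE.
  by repeat (case/orP; [move/eqP->; assumption|]); move/eqP->.
have ES : S = [set x in [:: a; b; c; d; e; f; g]].
  by apply/eqP; rewrite eq_sym eqEcard sub7 cardsE (card_uniqP u7) cS /=.
have inS : forall z, z \in S -> [|| z == a, z == b, z == c, z == d, z == e, z == f | z == g].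
  by move=> z; rewrite ES !inE.
have ce' : c != e by neq_tac.
have [m1 m1T /andP [cm1 em1]] := cover_lem pl TLs cS HT HS cS' eS ce'.
have Lm1 := TL _ m1T.
have j1 : c \in m1 :&: S by rewrite inE cm1.
have j2 : e \in m1 :&: S by rewrite inE em1.
have [z [zS' zx zy _]] := card3P2 (HT _ m1T) j1 j2 ce'.
clear j1 j2; move: zS'; rewrite inE => /andP [zm zS].
have am1 : a \notin m1 by excl_tac pl.
have bm1 : b \notin m1 by excl_tac pl.
have fm1 : f \notin m1 by excl_tac pl.
have gm1 : g \notin m1 by excl_tac pl.
have dm1 : d \in m1.
  move: (inS z zS).
  repeat (case/orP; [move/eqP => E; subst z; first [assumption | contra_tac] |]).
  by move/eqP => E; subst z; first [assumption | contra_tac].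
clear z zx zy zm zS.
have bf' : b != f by neq_tac.
have [m2 m2T /andP [bm2 fm2]] := cover_lem pl TLs cS HT HS bS fS bf'.
have Lm2 := TL _ m2T.
have j1 : b \in m2 :&: S by rewrite inE bm2.
have j2 : f \in m2 :&: S by rewrite inE fm2.
have [z [zS' zx zy _]] := card3P2 (HT _ m2T) j1 j2 bf'.
clear j1 j2; move: zS'; rewrite inE => /andP [zm zS].
have am2 : a \notin m2 by excl_tac pl.
have cm2 : c \notin m2 by excl_tac pl.
have em2 : e \notin m2 by excl_tac pl.
have gm2 : g \notin m2 by excl_tac pl.
have dm2 : d \in m2.
  move: (inS z zS).
  repeat (case/orP; [move/eqP => E; subst z; first [assumption | contra_tac] |]).
  by move/eqP => E; subst z; first [assumption | contra_tac].
clear z zx zy zm zS.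
have bg' : b != g by neq_tac.
have [m3 m3T /andP [bm3 gm3]] := cover_lem pl TLs cS HT HS bS gS bg'.
have Lm3 := TL _ m3T.
have j1 : b \in m3 :&: S by rewrite inE bm3.
have j2 : g \in m3 :&: S by rewrite inE gm3.
have [z [zS' zx zy _]] := card3P2 (HT _ m3T) j1 j2 bg'.
clear j1 j2; move: zS'; rewrite inE => /andP [zm zS].
have am3 : a \notin m3 by excl_tac pl.
have dm3 : d \notin m3 by excl_tac pl.
have em3 : e \notin m3 by excl_tac pl.
have fm3 : f \notin m3 by excl_tac pl.
have cm3 : c \in m3.
  move: (inS z zS).
  repeat (case/orP; [move/eqP => E; subst z; first [assumption | contra_tac] |]).
  by move/eqP => E; subst z; first [assumption | contra_tac].
clear z zx zy zm zS.
have ab' : a != b by rewrite eq_sym.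
have ac' : a != c by rewrite eq_sym.
have ad' : a != d by rewrite eq_sym.
have bc' : b != c by neq_tac.
have bd' : b != d by neq_tac.
have cd' : c != d by neq_tac.
have Jab : join Lines a b = Lae by apply: (join_eq pl).
have Jcd : join Lines c d = m1 by apply: (join_eq pl).
have Jac : join Lines a c = Laf by apply: (join_eq pl).
have Jbd : join Lines b d = m2 by apply: (join_eq pl).
have Jad : join Lines a d = Lag by apply: (join_eq pl).
have Jbc : join Lines b c = m3 by apply: (join_eq pl).
have qd : quadrangle Lines a b c d.
  split.
  - by rewrite /= !inE !negb_or /= !andbT; repeat (apply/andP; split); try neq_tac.
  - by apply: (ncol pl) => //; rewrite Jab.
  - by apply: (ncol pl) => //; rewrite Jab.
  - by apply: (ncol pl) => //; rewrite Jac.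
  - by apply: (ncol pl) => //; rewrite Jbc.
by apply: (forward_coord pl qd hL eh fh gh); rewrite ?Jab ?Jcd ?Jac ?Jbd ?Jad ?Jbc.
Qed.

Theorem theorem2p2' : has_fano_configuration Lines <->
   exists (R : finType) (zero one : R) (O X Y U : P) (lab : R -> P),
     is_coordinatisation Lines zero one O X Y U lab n /\
     exists t : R, t != zero /\ loop_add Lines zero one O X Y U lab t t = zero.
Proof.
split; first exact: forward_fano.
case=> R [zero [one [O [X [Y [U [lab [co [t [tz ht]]]]]]]]]].
exact: (backward pl co tz ht).
Qed.
End Geo6.


Unset Implicit Arguments.

Theorem theorem2p2 (P : finType) (Lines : {set {set P}}) (n : nat) :
  proj_plane_of_order Lines n ->
  (has_fano_configuration Lines <->
   exists (R : finType) (zero one : R) (O X Y U : P) (lab : R -> P),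
     is_coordinatisation Lines zero one O X Y U lab n /\
     exists t : R, t != zero /\ loop_add Lines zero one O X Y U lab t t = zero).
Proof.
move=> pl; exact: (theorem2p2' pl).
Qed.
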